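(* Let $\mathcal{S}$ be the set of order types of linear orders $L$ such that $M\cdot_\omega L\cong M$ for every linear order $M$. Then $\mathcal{S}$ is closed under $\cdot_\omega$ and $\langle\mathcal{S},\cdot_\omega\rangle$ is a left-regular band: $\cdot_\omega$ is associative on $\mathcal{S}$, $L\cdot_\omega L\cong L$ for all $L\in\mathcal{S}$, and $L_1\cdot_\omega L_2\cdot_\omega L_1\cong L_1\cdot_\omega L_2$ for all $L_1,L_2\in\mathcal{S}$.
   Context: The countable condensation $\sim_\omega$ on a linear order $L$: $x\sim_\omega y$ iff the closed interval between $x$ and $y$ is countable; $L/\!\sim_\omega$ is the linear order of its classes. $ML$ denotes the lexicographic product (each element of $M$ replaced by a copy of $L$). For linear orders $M,L$, $M\cdot_\omega L$ is the order type of $ML/\!\sim_\omega$; this operation is considered on order types. A left-regular band is a semigroup in which every element is idempotent and $xyx=xy$ for all $x,y$. *)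

(* Defs.v *)
Record Ord := {
  carrier :> Type;
  lt : carrier -> carrier -> Prop
}.
Arguments lt {o} _ _.

Definition is_linear (L : Ord) : Prop :=
  (forall x : L, ~ lt x x) /\
  (forall x y z : L, lt x y -> lt y z -> lt x z) /\
  (forall x y : L, lt x y \/ x = y \/ lt y x).

Definition le {L : Ord} (x y : L) : Prop := lt x y \/ x = y.

Definition iso (L1 L2 : Ord) : Prop :=
  exists (f : L1 -> L2) (g : L2 -> L1),
    (forall x, g (f x) = x) /\ (forall y, f (g y) = y) /\
    (forall x y, lt x y <-> lt (f x) (f y)).

Definition countable_set {T : Type} (P : T -> Prop) : Prop :=
  exists f : {x : T | P x} -> nat, forall a b, f a = f b -> a = b.

Definition closed_between {L : Ord} (x y z : L) : Prop :=
  (le x z /\ le z y) \/ (le y z /\ le z x).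

Definition cond_omega {L : Ord} (x y : L) : Prop :=
  countable_set (closed_between x y).

Definition is_class (L : Ord) (P : L -> Prop) : Prop :=
  exists x : L, forall y, P y <-> cond_omega x y.

(** L / ~_w : the classes, ordered by  A < B  iff every element of A is below
    every element of B (classes are convex intervals). *)
Definition condense (L : Ord) : Ord := {|
  carrier := {P : L -> Prop | is_class L P};
  lt := fun A B => forall a b, proj1_sig A a -> proj1_sig B b -> lt a b
|}.

(** Lexicographic product ML: each element of M replaced by a copy of L. *)
Definition lexprod (M L : Ord) : Ord := {|
  carrier := (carrier M * carrier L)%type;
  lt := fun p q => lt (fst p) (fst q) \/ (fst p = fst q /\ lt (snd p) (snd q))
|}.

Definition cdot_omega (M L : Ord) : Ord := condense (lexprod M L).

Definition in_S (L : Ord) : Prop :=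
  is_linear L /\ forall M : Ord, is_linear M -> iso (cdot_omega M L) M.

(* Main.v *)
Require Import Defs.
From Stdlib Require Import FunctionalExtensionality PropExtensionality ProofIrrelevance.

Lemma iso_refl (A : Ord) : iso A A.
Proof. exists (fun x => x), (fun x => x). firstorder. Qed.

Lemma iso_sym (A B : Ord) : iso A B -> iso B A.
Proof.
  intros [f [g [H1 [H2 H3]]]]. exists g, f. split; [exact H2|split;[exact H1|]].
  intros x y. rewrite H3, !H2. tauto.
Qed.

Lemma iso_trans (A B C : Ord) : iso A B -> iso B C -> iso A C.
Proof.
  intros [f [g [H1 [H2 H3]]]] [f' [g' [H1' [H2' H3']]]].
  exists (fun x => f' (f x)), (fun z => g (g' z)). split; [|split].
  - intros x. rewrite H1'. apply H1.
  - intros z. rewrite H2. apply H2'.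
  - intros x y. rewrite H3, H3'. tauto.
Qed.

Lemma iso_linear (A B : Ord) : iso A B -> is_linear A -> is_linear B.
Proof.
  intros [f [g [H1 [H2 H3]]]] [Hi [Ht Htot]].
  assert (G : forall u v : B, lt u v <-> lt (g u) (g v)).
  { intros u v. rewrite H3, !H2. tauto. }
  split; [|split].
  - intros x Hx. apply (Hi (g x)). apply G. exact Hx.
  - intros x y z a b. apply G. apply G in a. apply G in b. eauto.
  - intros x y. destruct (Htot (g x) (g y)) as [h|[h|h]].
    + left. apply G. exact h.
    + right; left. rewrite <- (H2 x), h. apply H2.
    + right; right. apply G. exact h.
Qed.

Section Transport.
Variables (A B : Ord) (f : A -> B) (g : B -> A).
Hypotheses (H1 : forall x, g (f x) = x) (H2 : forall y, f (g y) = y)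
  (H3 : forall x y, lt x y <-> lt (f x) (f y)).

Lemma le_f a b : le a b <-> le (f a) (f b).
Proof.
  unfold le. rewrite H3. split; intros [h|h]; auto.
  - right; congruence.
  - right. rewrite <- (H1 a), h. apply H1.
Qed.

Lemma cb_f x y z : closed_between x y z <-> closed_between (f x) (f y) (f z).
Proof. unfold closed_between. rewrite !le_f. tauto. Qed.

Lemma cond_f x y : cond_omega x y -> cond_omega (f x) (f y).
Proof.
  intros [c Hc].
  assert (P : forall w : {z | closed_between (f x) (f y) z}, closed_between x y (g (proj1_sig w))).
  { intros [w hw]. simpl. apply cb_f. rewrite H2. exact hw. }
  exists (fun w => c (exist _ (g (proj1_sig w)) (P w))).
  intros a b h. apply Hc in h. injection h as h.
  destruct a as [a ha], b as [b hb]. simpl in h.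
  assert (a = b) by (rewrite <- (H2 a), h; apply H2). subst.
  f_equal. apply proof_irrelevance.
Qed.
End Transport.

Lemma cond_iff (A B : Ord) (f : A -> B) (g : B -> A)
  (H1 : forall x, g (f x) = x) (H2 : forall y, f (g y) = y)
  (H3 : forall x y, lt x y <-> lt (f x) (f y)) x y :
  cond_omega x y <-> cond_omega (f x) (f y).
Proof.
  split; [apply cond_f with g; auto|].
  intros h. rewrite <- (H1 x), <- (H1 y).
  apply cond_f with f; auto.
  intros u v. rewrite H3, !H2. tauto.
Qed.

Lemma iso_condense (A B : Ord) : iso A B -> iso (condense A) (condense B).
Proof.
  intros [f [g [H1 [H2 H3]]]].
  assert (G : forall u v : B, lt u v <-> lt (g u) (g v)).
  { intros u v. rewrite H3, !H2. tauto. }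
  assert (F : forall P : A -> Prop, is_class A P -> is_class B (fun y => P (g y))).
  { intros P [x Hx]. exists (f x). intros y. rewrite Hx.
    rewrite (cond_iff A B f g H1 H2 H3), H2. tauto. }
  assert (F' : forall Q : B -> Prop, is_class B Q -> is_class A (fun x => Q (f x))).
  { intros Q [y Hy]. exists (g y). intros x. rewrite Hy.
    rewrite (cond_iff B A g f H2 H1 G), H1. tauto. }
  exists (fun P => exist _ (fun y => proj1_sig P (g y)) (F _ (proj2_sig P))).
  exists (fun Q => exist _ (fun x => proj1_sig Q (f x)) (F' _ (proj2_sig Q))).
  split; [|split].
  - intros [P hP]. apply eq_sig_hprop; [intros; apply proof_irrelevance|].
    simpl. apply functional_extensionality. intros x. rewrite H1. reflexivity.
  - intros [P hP]. apply eq_sig_hprop; [intros; apply proof_irrelevance|].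
    simpl. apply functional_extensionality. intros x. rewrite H2. reflexivity.
  - intros [P hP] [Q hQ]; simpl. split.
    + intros h a b ha hb. apply G. apply h; assumption.
    + intros h a b ha hb. apply H3. apply h; rewrite H1; assumption.
Qed.

Lemma iso_lex (M L L' : Ord) : iso L L' -> iso (lexprod M L) (lexprod M L').
Proof.
  intros [f [g [H1 [H2 H3]]]].
  exists (fun p => (fst p, f (snd p))), (fun p => (fst p, g (snd p))).
  split; [|split].
  - intros [a b]; simpl; rewrite H1; reflexivity.
  - intros [a b]; simpl; rewrite H2; reflexivity.
  - intros [a b] [c d]; simpl. rewrite H3. tauto.
Qed.

Lemma iso_cdot_r (M L L' : Ord) : iso L L' -> iso (cdot_omega M L) (cdot_omega M L').
Proof. intros h. apply iso_condense, iso_lex, h. Qed.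

Theorem theorem5p2 :
  forall L1 L2 L3 : Ord, in_S L1 -> in_S L2 -> in_S L3 ->
    (* closure of S under .w *)
    in_S (cdot_omega L1 L2) /\
    (* associativity *)
    iso (cdot_omega (cdot_omega L1 L2) L3) (cdot_omega L1 (cdot_omega L2 L3)) /\
    (* idempotence *)
    iso (cdot_omega L1 L1) L1 /\
    (* left-regularity: L1 L2 L1 = L1 L2 *)
    iso (cdot_omega (cdot_omega L1 L2) L1) (cdot_omega L1 L2).
Proof.
  intros L1 L2 L3 [lin1 S1] [lin2 S2] [lin3 S3].
  assert (I12 : iso (cdot_omega L1 L2) L1) by (apply S2; exact lin1).
  assert (lin12 : is_linear (cdot_omega L1 L2))
    by (apply (iso_linear L1); [apply iso_sym, I12|exact lin1]).
  split; [|split; [|split]].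
  - split; [exact lin12|]. intros M HM.
    apply iso_trans with (cdot_omega M L1).
    + apply iso_cdot_r, I12.
    + apply S1, HM.
  - apply iso_trans with (cdot_omega L1 L2); [apply S3, lin12|].
    apply iso_cdot_r. apply iso_sym. apply S3, lin2.
  - apply S1, lin1.
  - apply S1, lin12.
Qed.
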